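(* Consider a gossip network consisting of a source node $s$ and end-nodes $\mathcal{N}=\{1,\dots,n\}$, with the dynamics described in the context. For a nonempty subset $S\subseteq\mathcal{N}$, let $F_S(t)=\max_{j\in S}F_j(t)$ and $F_S=\lim_{t\to\infty}\mathbb{E}[F_S(t)]$. Then for every nonempty $S\subseteq \mathcal{N}$, $$F_S=\frac{\lambda_s(S)+\sum_{i\in N(S)}\lambda_i(S)\,F_{S\cup\{i\}}}{\lambda_e+\lambda_s(S)+\sum_{i\in N(S)}\lambda_i(S)}.$$
   Context: Model: The information at the source is updated (a new version is generated) according to a Poisson process of rate $\lambda_e>0$. The source sends its current version to end-node $j\in\mathcal{N}$ according to a Poisson process of rate $\lambda_{sj}\ge 0$, and end-node $i$ sends its currently stored version to end-node $j\neq i$ according to a Poisson process of rate $\lambda_{ij}\ge 0$; all these processes are independent. When a node receives a version, it keeps the fresher of its stored version and the received one. The binary freshness of end-node $k$ at time $t$ is $F_k(t)=1$ if node $k$ stores the current version of the source, and $F_k(t)=0$ otherwise. Thus: when the source generates a new version, all $F_k$ become $0$; when the source updates node $j$, $F_j$ becomes $1$; when node $i$ updates node $j$, $F_j$ becomes $\max(F_i,F_j)$. Notation: for $S\subseteq\mathcal{N}$, $\lambda_s(S)=\sum_{j\in S}\lambda_{sj}$ is the total update rate from the source into $S$; for $i\notin S$, $\lambda_i(S)=\sum_{j\in S}\lambda_{ij}$ is the total update rate from node $i$ into $S$; $N(S)=\{i\in\mathcal{N}\setminus S:\lambda_i(S)>0\}$ is the set of updating neighbors of $S$. *)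

(* Defs.v *)
From HB Require Import structures.
From mathcomp Require Import all_boot all_order all_algebra.
From mathcomp Require Import all_classical all_reals all_analysis.
Set Implicit Arguments. Unset Strict Implicit. Unset Printing Implicit Defensive.
Import Order.TTheory GRing.Theory Num.Theory.
Import numFieldNormedType.Exports.
Local Open Scope ring_scope.

(* Joint binary-freshness state of the end-nodes 'I_n : x k = true iff node k
   stores the current version of the source. *)
Definition fstate (n : nat) := {ffun 'I_n -> bool}.

Definition new_version {n} (x : fstate n) : fstate n := [ffun => false].
Definition src_update {n} (j : 'I_n) (x : fstate n) : fstate n :=
  [ffun k => if k == j then true else x k].
Definition node_update {n} (i j : 'I_n) (x : fstate n) : fstate n :=
  [ffun k => if k == j then x i || x j else x k].

(* Right-hand side of the Kolmogorov forward equation of the continuous-time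
   Markov chain: each event e with rate r_e and effect f_e contributes
   r_e * (P(f_e X = y) - P(X = y)). *)
Definition fwd_rhs {R : realType} {n} (le : R) (ls : 'I_n -> R)
  (lam : 'I_n -> 'I_n -> R) (q : fstate n -> R) (y : fstate n) : R :=
  le * (\sum_(x | new_version x == y) q x - q y)
  + \sum_(j : 'I_n) ls j * (\sum_(x | src_update j x == y) q x - q y)
  + \sum_(i : 'I_n) \sum_(j : 'I_n | i != j)
       lam i j * (\sum_(x | node_update i j x == y) q x - q y).

(* p x t = probability that the freshness state at time t is x. *)
Definition freshness_law {R : realType} {n} (le : R) (ls : 'I_n -> R)
  (lam : 'I_n -> 'I_n -> R) (p : fstate n -> R -> R) : Prop :=
  (forall x, 0 <= p x 0) /\ (\sum_x p x 0 = 1) /\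
  (forall (y : fstate n) (t : R),
      is_derive t 1 (p y) (fwd_rhs le ls lam (fun x => p x t) y)).

(* E[F_S(t)] with F_S(t) = max_{j in S} F_j(t). *)
Definition EF {R : realType} {n} (p : fstate n -> R -> R) (S : {set 'I_n})
  (t : R) : R :=
  \sum_(x : fstate n) p x t * (if [exists j in S, x j] then 1 else 0).

Definition lam_s {R : realType} {n} (ls : 'I_n -> R) (S : {set 'I_n}) : R :=
  \sum_(j in S) ls j.
Definition lam_i {R : realType} {n} (lam : 'I_n -> 'I_n -> R) (i : 'I_n)
  (S : {set 'I_n}) : R := \sum_(j in S) lam i j.
Definition nbrs {R : realType} {n} (lam : 'I_n -> 'I_n -> R) (S : {set 'I_n})
  : {set 'I_n} := [set i | (i \notin S) && (0 < lam_i lam i S)].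

(* Main.v *)
Require Import Defs.
From HB Require Import structures.
From mathcomp Require Import all_boot all_order all_algebra.
From mathcomp Require Import all_classical all_reals all_analysis.
From mathcomp Require Import ring lra zify.
Import Order.TTheory GRing.Theory Num.Theory.
Import numFieldNormedType.Exports.
Local Open Scope classical_set_scope.
Local Open Scope ring_scope.

Section ODE.
Variable R : realType.

Lemma mono_nonpos (v dv : R -> R) (T : R) :
  (forall t : R, is_derive t (1:R) v (dv t)) -> (forall t, T <= t -> dv t <= 0) ->
  forall t, T <= t -> v t <= v T.
Proof.
move=> Hd Hn t Tt.
have [| x xT E] := MVT_segment Tt (fun x _ => Hd x).
  apply/continuous_subspaceT=> r.
  exact/differentiable_continuous/derivable1_diffP.
rewrite -subr_le0 E mulr_le0_ge0 ?subr_ge0 //.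
apply: Hn; by rewrite (itvP xT).
Qed.

Lemma ode_ub (f h : R -> R) (c M T e : R) :
  0 < c -> 0 < e -> (forall t : R, is_derive t (1:R) f (h t - c * f t)) ->
  (forall t, T <= t -> h t <= M) ->
  exists K, forall t, K <= t -> f t <= M / c + e.
Proof.
move=> c0 e0 Hd HM.
pose v := fun t => expR (c * t) * (f t - M / c).
have dv : forall t : R, is_derive t (1:R) v (expR (c * t) * (h t - M)).
  move=> t.
  have de : is_derive t 1 (fun s => expR (c * s)) (expR (c * t) * c).
    have dl : is_derive t (1:R) (fun s : R => c * s) c.
      have := is_deriveZ c (is_derive_id t (1:R)).
      by rewrite /GRing.scale /= mulr1.
    exact: (@is_derive1_comp R expR (fun s => c * s) t (expR (c * t)) c (is_derive_expR _) dl).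
  have dfm : is_derive t 1 (fun s => f s - M / c) (h t - c * f t).
    have := is_deriveB (Hd t) (is_derive_cst (M / c) t (1:R)).
    by rewrite subr0.
  have H := is_deriveM de dfm.
  have -> : v = (fun s => expR (c * s)) * (fun s => f s - M / c) by apply/funext.
  apply: (is_derive_eq H).
  rewrite /GRing.scale /=.
  have cn : c != 0 by rewrite gt_eqF.
  rewrite /=. field. done.
have mono := @mono_nonpos v _ T dv.
have mono' : forall t, T <= t -> v t <= v T.
  apply: mono => t Tt.
  by rewrite mulr_ge0_le0 ?expR_ge0 // subr_le0 HM.
exists (Num.max T (`|v T| / (e * c))) => t.
rewrite ge_max => /andP[Tt Kt].
have Hv := mono' t Tt.
rewrite -lerBlDl.
have ep : 0 < expR (c * t) := expR_gt0 _.
have -> : f t - M / c = v t / expR (c * t).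
  rewrite /v; field; by rewrite !gt_eqF.
rewrite ler_pdivrMr //.
apply: (le_trans Hv).
apply: (le_trans (ler_norm _)).
have ect : e * c * t <= e * expR (c * t).
  rewrite -mulrA ler_pM2l //.
  apply: le_trans (expR_ge1Dx _); by rewrite lerDr.
apply: le_trans ect.
by move: Kt; rewrite ler_pdivrMr ?mulr_gt0 // mulrC.
Qed.


Lemma ode_lim (f h : R -> R) (c L : R) :
  0 < c -> (forall t : R, is_derive t (1:R) f (h t - c * f t)) ->
  h t @[t --> +oo] --> L -> f t @[t --> +oo] --> L / c.
Proof.
move=> c0 Hd hL; apply/cvgrPdist_le => e e0.
have e2 : 0 < e / 2 by rewrite divr_gt0.
have ce : 0 < c * (e / 2) by rewrite mulr_gt0.
have [T [_ HT]] := (cvgrPdist_le _ _).1 hL _ ce.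
have B1 : forall t, T + 1 <= t -> h t <= L + c * (e / 2).
  move=> t Tt; have := HT t (lt_le_trans (ltr_pwDr ltr01 (lexx T)) Tt).
  rewrite ler_norml => /andP[+ _]; lra.
have B2 : forall t, T + 1 <= t -> - h t <= - L + c * (e / 2).
  move=> t Tt; have := HT t (lt_le_trans (ltr_pwDr ltr01 (lexx T)) Tt).
  rewrite ler_norml => /andP[_]; lra.
have [K1 H1] := @ode_ub f h c (L + c * (e / 2)) (T + 1) (e / 2) c0 e2 Hd B1.
have Hd' : forall t : R, is_derive t (1:R) (fun s => - f s) (- h t - c * (- f t)).
  move=> t; have := is_deriveN (Hd t).
  by rewrite mulrN opprK opprB addrC.
have [K2 H2] := @ode_ub (fun s => - f s) (fun s => - h s) c (- L + c * (e / 2)) (T + 1) (e / 2) c0 e2 Hd' B2.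
exists (Num.max K1 K2); split; first exact: num_real.
move=> t; rewrite gt_max => /andP[/ltW /H1 {}H1 /ltW /H2 {}H2].
have E1 : (L + c * (e / 2)) / c = L / c + e / 2 by field; rewrite gt_eqF.
have E2 : (- L + c * (e / 2)) / c = - (L / c) + e / 2 by field; rewrite gt_eqF.
rewrite E1 in H1; rewrite E2 in H2.
rewrite ler_norml; apply/andP; split; lra.
Qed.

End ODE.

Section Comb.
Variable R : realType.

Lemma push (T : finType) (f : T -> T) (q g : T -> R) :
  \sum_y g y * (\sum_(x | f x == y) q x - q y) = \sum_x q x * (g (f x) - g x).
Proof.
under eq_bigr do rewrite mulrBr mulr_sumr.
under [RHS]eq_bigr do rewrite mulrBr.
rewrite !sumrB; congr (_ - _); last by apply: eq_bigr => x _; rewrite mulrC.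
rewrite [RHS](partition_big f xpredT) //=; apply: eq_bigr => y _.
by apply: eq_bigr => x /eqP <-; rewrite mulrC.
Qed.

Lemma is_derive_bigsum (I : Type) (r : seq I) (P : pred I) (h : I -> R -> R)
  (dh : I -> R) (t : R) :
  (forall i, P i -> is_derive t (1:R) (h i) (dh i)) ->
  is_derive t (1:R) (fun s => \sum_(i <- r | P i) h i s) (\sum_(i <- r | P i) dh i).
Proof.
move=> H; elim: r => [|a r IH].
  have -> : (fun s => \sum_(i <- [::] | P i) h i s) = (fun _ => 0 : R).
    by apply/funext => s; rewrite big_nil.
  rewrite big_nil; exact: is_derive_cst.
rewrite big_cons; case: ifPn => Pa.
  have -> : (fun s => \sum_(i <- a :: r | P i) h i s) =
     (h a) + (fun s => \sum_(i <- r | P i) h i s).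
    by apply/funext => s; rewrite big_cons Pa.
  exact: is_deriveD (H a Pa) IH.
have -> : (fun s => \sum_(i <- a :: r | P i) h i s) =
     (fun s => \sum_(i <- r | P i) h i s).
  by apply/funext => s; rewrite big_cons (negbTE Pa).
exact: IH.
Qed.

Lemma is_derive_mulc (f : R -> R) t df k :
  is_derive t (1:R) f df -> is_derive t (1:R) (fun s => f s * k) (df * k).
Proof.
move=> H; have -> : (fun s => f s * k) = k \*: f.
  by apply/funext => s; rewrite /= mulrC.
by apply: is_derive_eq (is_deriveZ k H) _; rewrite /GRing.scale /= mulrC.
Qed.

Lemma cvg_bigsum (I : Type) (r : seq I) (P : pred I) (F : I -> R -> R) (a : I -> R) :
  (forall i, P i -> F i t @[t --> +oo] --> a i) ->
  (\sum_(i <- r | P i) F i t) @[t --> +oo] --> \sum_(i <- r | P i) a i.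
Proof.
move=> H; elim: r => [|x r IH].
  rewrite big_nil; under eq_cvg do rewrite big_nil; exact: cvg_cst.
rewrite big_cons; under eq_cvg do rewrite big_cons.
case: ifPn => Px //.
exact: (cvgD (f := F x) (g := fun t => \sum_(i <- r | P i) F i t) (H x Px) IH).
Qed.

End Comb.

Section Model.
Variables (R : realType) (n : nat) (le : R) (ls : 'I_n -> R) (lam : 'I_n -> 'I_n -> R).

Definition G (S : {set 'I_n}) (x : fstate n) : R :=
  if [exists j in S, x j] then 1 else 0.

Definition D (q g : fstate n -> R) (f : fstate n -> fstate n) : R :=
  \sum_y g y * (\sum_(x | f x == y) q x - q y).

Lemma rhs_split q g : \sum_y g y * fwd_rhs le ls lam q y =
  le * D q g new_version + \sum_j ls j * D q g (src_update j)
  + \sum_i \sum_(j | i != j) lam i j * D q g (node_update i j).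
Proof.
rewrite /fwd_rhs /D.
under eq_bigr do rewrite mulrDr mulrDr.
rewrite !big_split /=.
congr (_ + _ + _).
- by rewrite mulr_sumr; apply: eq_bigr => y _; rewrite mulrCA.
- under eq_bigr do rewrite mulr_sumr.
  rewrite exchange_big /=; apply: eq_bigr => j _; rewrite mulr_sumr.
  by apply: eq_bigr => y _; rewrite mulrCA.
- under eq_bigr do rewrite mulr_sumr.
  rewrite exchange_big /=; apply: eq_bigr => i _.
  under eq_bigr do rewrite mulr_sumr.
  rewrite exchange_big /=; apply: eq_bigr => j _; rewrite mulr_sumr.
  by apply: eq_bigr => y _; rewrite mulrCA.
Qed.

Lemma G_nv (S : {set 'I_n}) (x : fstate n) : G S (new_version x) = 0.
Proof.
rewrite /G; case: existsP => // -[j /andP[_]]; by rewrite ffunE.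
Qed.

Lemma G_su (S : {set 'I_n}) (j : 'I_n) (x : fstate n) : G S (src_update j x) - G S x = (j \in S)%:R * (1 - G S x).
Proof.
case: (boolP (j \in S)) => jS.
  have -> : G S (src_update j x) = 1.
    rewrite /G; case: existsP => // -[]; exists j; by rewrite jS ffunE eqxx.
  by rewrite mul1r.
rewrite mul0r /G.
have -> : [exists k in S, src_update j x k] = [exists k in S, x k].
  apply: eq_existsb => k; rewrite ffunE; case: eqP => // ->.
  by rewrite (negbTE jS).
by rewrite subrr.
Qed.

Lemma ex_nu (S : {set 'I_n}) (i j : 'I_n) (x : fstate n) : [exists k in S, node_update i j x k] =
  [exists k in S, x k] || ((j \in S) && x i).
Proof.
apply/idP/idP.
  case/existsP => k /andP[kS]; rewrite ffunE; case: eqP => [Ekj|_ xk].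
    rewrite Ekj in kS => /orP[xi|xj]; apply/orP.
      by right; rewrite kS xi.
    by left; apply/existsP; exists j; rewrite kS xj.
  by apply/orP; left; apply/existsP; exists k; rewrite kS xk.
case/orP => [/existsP[k /andP[kS xk]] | /andP[jS xi]]; apply/existsP.
  exists k; rewrite kS ffunE; case: eqP => // Ekj.
  by rewrite -Ekj xk orbT.
by exists j; rewrite jS ffunE eqxx xi.
Qed.

Lemma ex_U1 (S : {set 'I_n}) (i : 'I_n) (x : fstate n) : [exists k in i |: S, x k] = x i || [exists k in S, x k].
Proof.
apply/idP/idP.
  case/existsP => k /andP[]; rewrite in_setU1 => /orP[/eqP->|kS] xk.
    by rewrite xk.
  by apply/orP; right; apply/existsP; exists k; rewrite kS xk.
case/orP => [xi|/existsP[k /andP[kS xk]]]; apply/existsP.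
  by exists i; rewrite setU11 xi.
by exists k; rewrite setU1r.
Qed.

Lemma G_nu (S : {set 'I_n}) (i j : 'I_n) (x : fstate n) : G S (node_update i j x) - G S x =
  ((j \in S) && (i \notin S))%:R * (G (i |: S) x - G S x).
Proof.
have HE : i \in S -> x i -> [exists k in S, x k].
  by move=> iS xi; apply/existsP; exists i; rewrite iS xi.
rewrite /G ex_nu ex_U1.
move: HE; case: (j \in S); case: (i \in S); case: (x i);
  case: [exists k in S, x k] => //= HE;
  rewrite ?mul0r ?mul1r ?subrr //.
by have := HE isT isT.
Qed.

Lemma is_derive_lin (p : fstate n -> R -> R)
  (Hp : forall (y : fstate n) (t : R),
      is_derive t 1 (p y) (fwd_rhs le ls lam (fun x => p x t) y))
  (g : fstate n -> R) (t : R) :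
  is_derive t (1:R) (fun s => \sum_x p x s * g x)
    (\sum_y g y * fwd_rhs le ls lam (fun x => p x t) y).
Proof.
have H := @is_derive_bigsum R _ (index_enum (fstate n)) xpredT
  (fun x s => p x s * g x)
  (fun x => fwd_rhs le ls lam (fun x => p x t) x * g x) t
  (fun x _ => @is_derive_mulc R _ t _ (g x) (Hp x t)).
apply: is_derive_eq H _.
by apply: eq_bigr => y _; rewrite mulrC.
Qed.

Lemma mass (p : fstate n -> R -> R)
  (Hp : forall (y : fstate n) (t : R),
      is_derive t 1 (p y) (fwd_rhs le ls lam (fun x => p x t) y))
  (H0 : \sum_x p x 0 = 1) (t : R) : \sum_x p x t = 1.
Proof.
have E : forall s, \sum_x p x s = \sum_x p x s * (fun _ => 1) x.
  by move=> s; apply: eq_bigr => x _; rewrite mulr1.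
rewrite -H0 (E t) (E 0).
apply: (@is_derive_0_is_cst R (fun s => \sum_x p x s * (fun _ => 1) x)) => s.
apply: is_derive_eq (is_derive_lin p Hp (fun _ => 1) s) _.
have Z : forall f : fstate n -> fstate n,
    D (fun x => p x s) (fun _ => 1) f = 0.
  by move=> f; rewrite /D push; apply: big1 => x _; rewrite subrr mulr0.
rewrite rhs_split Z mulr0 add0r.
under eq_bigr do rewrite Z mulr0.
rewrite big1_eq add0r; apply: big1 => i _.
by apply: big1 => j _; rewrite Z mulr0.
Qed.

Lemma dEF (p : fstate n -> R -> R) (Hmass : forall t, \sum_x p x t = 1)
  (Hlam : forall i j, i != j -> 0 <= lam i j)
  (S : {set 'I_n}) (t : R) :
  \sum_y G S y * fwd_rhs le ls lam (fun x => p x t) y =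
  (lam_s ls S + \sum_(i in nbrs lam S) lam_i lam i S * EF p (i |: S) t)
  - (le + lam_s ls S + \sum_(i in nbrs lam S) lam_i lam i S) * EF p S t.
Proof.
set q := fun x => p x t.
have EFE : forall T, EF p T t = \sum_x q x * G T x by [].
have T1 : D q (G S) new_version = - EF p S t.
  rewrite /D push EFE -sumrN; apply: eq_bigr => x _.
  by rewrite G_nv sub0r mulrN.
have T2 : forall j, D q (G S) (src_update j) = (j \in S)%:R * (1 - EF p S t).
  move=> j; rewrite /D push.
  under eq_bigr do rewrite G_su mulrCA.
  rewrite -mulr_sumr; congr (_ * _).
  under eq_bigr do rewrite mulrBr mulr1.
  by rewrite sumrB EFE; congr (_ - _); exact: Hmass.
have T3 : forall i j, D q (G S) (node_update i j) =
    ((j \in S) && (i \notin S))%:R * (EF p (i |: S) t - EF p S t).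
  move=> i j; rewrite /D push.
  under eq_bigr do rewrite G_nu mulrCA.
  rewrite -mulr_sumr; congr (_ * _).
  rewrite !EFE -sumrB; apply: eq_bigr => x _.
  by rewrite mulrBr.
rewrite rhs_split T1.
under eq_bigr do rewrite T2.
have S2 : \sum_j ls j * ((j \in S)%:R * (1 - EF p S t)) = lam_s ls S * (1 - EF p S t).
  rewrite /lam_s mulr_suml [in RHS]big_mkcond; apply: eq_bigr => j _.
  by case: (j \in S); rewrite /= ?mul1r ?mul0r ?mulr0.
have S3 : \sum_i \sum_(j | i != j) lam i j * D q (G S) (node_update i j) =
    \sum_(i in nbrs lam S) lam_i lam i S * (EF p (i |: S) t - EF p S t).
  rewrite [RHS]big_mkcond; apply: eq_bigr => i _.
  under eq_bigr do rewrite T3.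
  rewrite /nbrs inE.
  case: (boolP (i \in S)) => iS /=.
    by rewrite big1 // => j _; rewrite andbF mul0r mulr0.
  have L : \sum_(j | i != j) lam i j *
      (((j \in S) && true)%:R * (EF p (i |: S) t - EF p S t)) =
      lam_i lam i S * (EF p (i |: S) t - EF p S t).
    rewrite /lam_i mulr_suml big_mkcond [RHS]big_mkcond; apply: eq_bigr => j _.
    case: (boolP (j \in S)) => jS; case: (eqVneq i j) => [eij|nij] /=.
    - by rewrite eij jS in iS.
    - by rewrite mul1r.
    - by [].
    - by rewrite mul0r mulr0.
  rewrite L; case: ifP => // /negbT; rewrite -leNgt => l0.
  have g0 : 0 <= lam_i lam i S.
    apply: sumr_ge0 => j jS; apply: Hlam.
    by apply/eqP => eij; rewrite eij jS in iS.
  have -> : lam_i lam i S = 0 by apply/eqP; rewrite eq_le l0 g0.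
  by rewrite mul0r.
rewrite S2 S3.
under eq_bigr do rewrite mulrBr.
rewrite sumrB -mulr_suml.
ring.
Qed.

End Model.

Theorem theorem1 (R : realType) (n : nat) (le : R) (ls : 'I_n -> R)
  (lam : 'I_n -> 'I_n -> R) (p : fstate n -> R -> R) :
  0 < le ->
  (forall j, 0 <= ls j) ->
  (forall i j, i != j -> 0 <= lam i j) ->
  freshness_law le ls lam p ->
  forall S : {set 'I_n}, S != finset.set0 ->
    cvg (EF p S t @[t --> +oo]) /\
    lim (EF p S t @[t --> +oo]) =
      (lam_s ls S + \sum_(i in nbrs lam S)
                       lam_i lam i S * lim (EF p (i |: S) t @[t --> +oo]))
      / (le + lam_s ls S + \sum_(i in nbrs lam S) lam_i lam i S).
Proof.
move=> le0 ls0 lam0 [_ [H0 Hp]].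
have Hmass := @mass _ _ _ _ _ p Hp H0.
have step : forall S : {set 'I_n},
  (forall i, i \in nbrs lam S -> cvg (EF p (i |: S) t @[t --> +oo])) ->
  EF p S t @[t --> +oo] -->
    (lam_s ls S + \sum_(i in nbrs lam S)
                       lam_i lam i S * lim (EF p (i |: S) t @[t --> +oo]))
      / (le + lam_s ls S + \sum_(i in nbrs lam S) lam_i lam i S).
  move=> S IH.
  have g1 : 0 <= lam_s ls S by apply: sumr_ge0 => j _.
  have g2 : 0 <= \sum_(i in nbrs lam S) lam_i lam i S.
    apply: sumr_ge0 => i; rewrite /nbrs inE => /andP[_ /ltW] //.
  have C0 : 0 < le + lam_s ls S + \sum_(i in nbrs lam S) lam_i lam i S by lra.
  apply: (@ode_lim R (EF p S)
    (fun t => lam_s ls S + \sum_(i in nbrs lam S) lam_i lam i S * EF p (i |: S) t)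
    _ _ C0).
    move=> t.
    exact: (is_derive_eq (@is_derive_lin _ _ _ _ _ p Hp (@G R n S) t)
                         (@dEF _ _ _ _ _ p Hmass lam0 S t)).
  apply: (cvgD (f := fun _ => lam_s ls S)
    (g := fun t => \sum_(i in nbrs lam S) lam_i lam i S * EF p (i |: S) t)).
    exact: cvg_cst.
  apply: (@cvg_bigsum R) => i Hi.
  exact: cvgMr (IH i Hi).
have cvgall : forall k (S : {set 'I_n}), (n - #|S| <= k)%N -> cvg (EF p S t @[t --> +oo]).
  elim=> [|k IHk] S Hk; apply/cvg_ex; eexists; apply: step => i;
    rewrite /nbrs inE => /andP[iS _];
    have := max_card (mem (i |: S)); rewrite cardsU1 iS card_ord => Hc.
    exfalso; move: Hk Hc; lia.
  by apply: IHk; rewrite cardsU1 iS; move: Hk Hc; lia.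
move=> S _.
have cS := cvgall _ S (leqnn _).
split => //.
apply: (cvg_lim (@Rhausdorff R)); apply: step => i _.
exact: cvgall _ _ (leqnn _).
Qed.
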